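(* With the notation of the context, let $\bm c$ be an integer vector and $\bm p\in\mathbb{Z}_\omega^{2n}$ a profile. There exists a sequence compatible with $\bm p$ for $\bm c$ if and only if there are integer vectors $\bm a_0,\bm a$ with $\bm a\neq\bm 0$ such that: (1) for every $i$ with $p_{2i-1}\in\mathbb{Z}$: $\bm r_i^\top\bm a_0\le p_{2i-1}$ and $\bm r_i^\top\bm a\le 0$; (2) for every $i$ with $p_{2i}\in\mathbb{Z}$: $p_{2i}\le\bm s_i^\top\bm a_0+\bm t_i^\top\bm c+h_i$ and $\bm s_i^\top\bm a\ge0$; (3) for every $i$ with $p_{2i}=\omega$: $\bm s_i^\top\bm a>0$; (4) for every $j\in[1,m]$: $\bm u_j^\top\bm a_0\approx^j_{e_j}\bm v_j^\top(\bm a_0+\bm a)+\bm w_j^\top\bm c+d_j$, $\bm u_j^\top\bm a\equiv_{e_j}0$ and $\bm v_j^\top\bm a\equiv_{e_j}0$.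
   Context: Fixed data: integer vectors $\bm r_i,\bm s_i,\bm t_i$ and $h_i\in\mathbb{Z}$ for $i\in[1,n]$; integer vectors $\bm u_j,\bm v_j,\bm w_j$, $d_j\in\mathbb{Z}$, $e_j>0$ and relations $\approx^j_{e_j}\in\{\equiv_{e_j},\not\equiv_{e_j}\}$ for $j\in[1,m]$ ($s\equiv_e t$ means $e\mid s-t$). $\mathbb{Z}_\omega=\mathbb{Z}\cup\{\omega\}$, $\omega$ above all integers. A profile is $\bm p=(p_1,\dots,p_{2n})\in\mathbb{Z}_\omega^{2n}$. A sequence of pairwise distinct integer vectors $\bm a_1,\bm a_2,\dots$ is compatible with $\bm p$ for $\bm c$ if for all $k<\ell$ and $j$, $\bm u_j^\top\bm a_k\approx^j_{e_j}\bm v_j^\top\bm a_\ell+\bm w_j^\top\bm c+d_j$, and for all $i$, $\sup_k\bm r_i^\top\bm a_k\le p_{2i-1}$ and $p_{2i}\le\liminf_k(\bm s_i^\top\bm a_k+\bm t_i^\top\bm c+h_i)$ (value $+\infty$ identified with $\omega$). *)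

(* Defs.v *)
From HB Require Import structures.
From mathcomp Require Import all_boot all_order all_algebra.
Set Implicit Arguments. Unset Strict Implicit. Unset Printing Implicit Defensive.
Import Order.TTheory GRing.Theory Num.Theory.
Local Open Scope ring_scope.

Definition dotv (k : nat) (x y : 'rV[int]_k) : int := \sum_(q < k) x 0 q * y 0 q.

Definition congr_e (e s t : int) : Prop := (e %| s - t)%Z.

Definition approx (b : bool) (e s t : int) : Prop :=
  if b then congr_e e s t else ~ congr_e e s t.

(* Z_omega = option int, with None = omega. A profile is a (2n)-tuple. *)
(* 0-indexed: p_{2i-1} (paper, i in [1,n]) is entry 2i' and p_{2i} is
   entry 2i'+1, where i' = i - 1 : 'I_n. *)
Definition p_odd (n : nat) (p : (2 * n).-tuple (option int)) (i : 'I_n) :=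
  nth None p (2 * i)%N.
Definition p_even (n : nat) (p : (2 * n).-tuple (option int)) (i : 'I_n) :=
  nth None p (2 * i).+1.

(* sup_k x_k <= p, for p in Z_omega (sup = +oo identified with omega). *)
Definition sup_le (x : nat -> int) (p : option int) : Prop :=
  match p with
  | Some z => forall k, x k <= z
  | None => True
  end.

(* p <= liminf_k x_k, for p in Z_omega, x integer-valued
   (liminf = +oo identified with omega). *)
Definition le_liminf (p : option int) (x : nat -> int) : Prop :=
  match p with
  | Some z => exists N, forall k, (N <= k)%N -> z <= x k
  | None => forall M : int, exists N, forall k, (N <= k)%N -> M <= x k
  end.

Definition compatible (d l n m : nat)
    (r s : 'I_n -> 'rV[int]_d) (t : 'I_n -> 'rV[int]_l) (h : 'I_n -> int)
    (u v : 'I_m -> 'rV[int]_d) (w : 'I_m -> 'rV[int]_l) (dj : 'I_m -> int)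
    (e : 'I_m -> int) (rel : 'I_m -> bool)
    (p : (2 * n).-tuple (option int)) (c : 'rV[int]_l)
    (a : nat -> 'rV[int]_d) : Prop :=
  injective a /\
  (forall k ell : nat, (k < ell)%N -> forall j : 'I_m,
     approx (rel j) (e j) (dotv (u j) (a k))
            (dotv (v j) (a ell) + dotv (w j) c + dj j)) /\
  (forall i : 'I_n,
     sup_le (fun k => dotv (r i) (a k)) (p_odd p i) /\
     le_liminf (p_even p i) (fun k => dotv (s i) (a k) + dotv (t i) c + h i)).

(* Main.v *)
Require Import Defs.
From HB Require Import structures.
From mathcomp Require Import all_boot all_order all_algebra.
From mathcomp Require Import zify ring.
From Stdlib Require Import Classical ClassicalEpsilon.
Import Order.TTheory GRing.Theory Num.Theory.
Local Open Scope ring_scope.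

Lemma dotvD k (x y z : 'rV[int]_k) : dotv x (y + z) = dotv x y + dotv x z.
Proof. by rewrite /dotv -big_split; apply: eq_bigr => q _; rewrite !mxE mulrDr. Qed.

Lemma dotvB k (x y z : 'rV[int]_k) : dotv x (y - z) = dotv x y - dotv x z.
Proof. by rewrite /dotv -sumrB; apply: eq_bigr => q _; rewrite !mxE mulrBr. Qed.

Lemma dotvMn k (x y : 'rV[int]_k) (N : nat) : dotv x (y *+ N) = dotv x y *+ N.
Proof. by rewrite /dotv -sumrMnl; apply: eq_bigr => q _; rewrite mulmxnE mulrnAr. Qed.

Lemma min_tail (g : nat -> int) (B : int) k : (forall k, B <= g k) ->
  exists j, (k <= j)%N /\ forall j', (k <= j')%N -> g j <= g j'.
Proof.
move=> HB; apply: NNPP => Hno.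
suff: forall N j, (k <= j)%N -> `|g j - B|%N = N -> False.
  by move/(_ _ k (leqnn k) erefl).
elim/ltn_ind => N IH j kj eN; apply: Hno; exists j; split=> // j' kj'.
apply: NNPP => Hlt; have lt : g j' < g j by rewrite ltNge; apply/negP.
apply: (IH `|g j' - B|%N _ j' kj' erefl).
have := HB j; have := HB j'; lia.
Qed.

Lemma mono1 (g : nat -> int) (B : int) : (forall k, B <= g k) ->
  exists phi : nat -> nat, (forall i, (phi i < phi i.+1)%N) /\
    (forall i j, (i <= j)%N -> g (phi i) <= g (phi j)).
Proof.
move=> HB.
pose F k := proj1_sig (constructive_indefinite_description _ (min_tail g B k HB)).
have HF k : (k <= F k)%N /\ forall j', (k <= j')%N -> g (F k) <= g j'
  := proj2_sig (constructive_indefinite_description _ (min_tail g B k HB)).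
pose phi i := iter i (fun j => F j.+1) (F 0%N).
have Hphi i : exists k, (k <= phi i)%N /\ forall j', (k <= j')%N -> g (phi i) <= g j'.
  case: i => [|i]; first by exists 0%N; apply: HF.
  by exists (phi i).+1; rewrite /phi iterS; apply: HF.
have Hs i : (phi i < phi i.+1)%N by rewrite /phi iterS; case: (HF (phi i).+1).
exists phi; split => //.
apply: (homo_leq (r := fun x y : int => x <= y)) => //.
- by move=> y x z; apply: le_trans.
- move=> i; case: (Hphi i) => k [kp H]; apply: H.
  by apply: leq_trans kp (ltnW (Hs i)).
Qed.

Lemma incr_ge (phi : nat -> nat) : (forall i, (phi i < phi i.+1)%N) -> forall i, (i <= phi i)%N.
Proof. move=> H; elim=> [|i IH] //; exact: leq_ltn_trans IH (H i). Qed.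

Lemma incr_le (phi : nat -> nat) : (forall i, (phi i < phi i.+1)%N) ->
  forall i j, (i <= j)%N -> (phi i <= phi j)%N.
Proof.
move=> H; apply: (homo_leq (r := fun x y => (x <= y)%N)) => //.
- by move=> y x z; apply: leq_trans.
- by move=> i; apply: ltnW.
Qed.

Lemma mono_seq (I : eqType) (G : I -> nat -> int) (s : seq I) :
  (forall x, x \in s -> exists B, forall k, B <= G x k) ->
  exists phi : nat -> nat, (forall i, (phi i < phi i.+1)%N) /\
    forall x, x \in s -> forall i j, (i <= j)%N -> G x (phi i) <= G x (phi j).
Proof.
elim: s => [|x s IH] HB.
  by exists id; split.
case: IH => [y ys|phi [Hphi Hm]]; first by apply: HB; rewrite inE ys orbT.
case: (HB x (mem_head _ _)) => B HBx.
case: (@mono1 (fun k => G x (phi k)) B) => [k|psi [Hpsi Hm2]] //.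
exists (fun i => phi (psi i)); split.
  move=> i; apply: (homo_ltn (r := fun x y => (x < y)%N)) => //.
  by move=> ? ? ?; apply: ltn_trans.
move=> y; rewrite inE => /orP [/eqP -> | ys] i j ij; first exact: Hm2.
by apply: Hm => //; apply: incr_le.
Qed.

Lemma mono_fin (I : finType) (G : I -> nat -> int) :
  (forall x, exists B, forall k, B <= G x k) ->
  exists phi : nat -> nat, (forall i, (phi i < phi i.+1)%N) /\
    forall x i j, (i <= j)%N -> G x (phi i) <= G x (phi j).
Proof.
move=> HB; case: (@mono_seq I G (enum I)) => [x _|phi [H1 H2]]; first exact: HB.
by exists phi; split => // x; apply: H2; rewrite mem_enum.
Qed.

Lemma approx_congr b e x y x' y' : (e %| x - x')%Z -> (e %| y - y')%Z ->
  approx b e x' y' -> approx b e x y.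
Proof.
move=> H1 H2; rewrite /approx /congr_e.
have E1 : x - y = (x' - y') + (x - x') - (y - y') by ring.
have E2 : x' - y' = (x - y) - (x - x') + (y - y') by ring.
case: b.
  by move=> H; rewrite E1; apply: rpredB => //; apply: rpredD.
move=> H H'; apply: H; rewrite E2; apply: rpredD => //; exact: rpredB.
Qed.

Lemma backward (d l n m : nat)
    (r s : 'I_n -> 'rV[int]_d) (t : 'I_n -> 'rV[int]_l) (h : 'I_n -> int)
    (u v : 'I_m -> 'rV[int]_d) (w : 'I_m -> 'rV[int]_l) (dj : 'I_m -> int)
    (e : 'I_m -> int) (rel : 'I_m -> bool)
    (c : 'rV[int]_l) (p : (2 * n).-tuple (option int)) :
  (exists a0 a : 'rV[int]_d, a != 0 /\
     (forall i : 'I_n, forall z, p_odd p i = Some z ->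
        dotv (r i) a0 <= z /\ dotv (r i) a <= 0) /\
     (forall i : 'I_n, forall z, p_even p i = Some z ->
        z <= dotv (s i) a0 + dotv (t i) c + h i /\ 0 <= dotv (s i) a) /\
     (forall i : 'I_n, p_even p i = None -> 0 < dotv (s i) a) /\
     (forall j : 'I_m,
        approx (rel j) (e j) (dotv (u j) a0)
               (dotv (v j) (a0 + a) + dotv (w j) c + dj j) /\
        congr_e (e j) (dotv (u j) a) 0 /\
        congr_e (e j) (dotv (v j) a) 0)) ->
  (exists a : nat -> 'rV[int]_d, compatible r s t h u v w dj e rel p c a).
Proof.
move=> [a0 [a [anz [H1 [H2 [H3 H4]]]]]].
exists (fun k => a0 + a *+ k); split; [|split].
- move=> k k' /addrI Ekk.
  have [q Hq] : exists q, a 0 q != 0.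
    apply: NNPP => H; move/eqP: anz; apply; apply/rowP => q; rewrite mxE.
    by apply/eqP; apply: NNPP => H'; apply: H; exists q; apply/negP.
  apply: (mulrIn Hq); have := congr1 (fun M : 'rV[int]_d => M 0 q) Ekk.
  by rewrite /= !mulmxnE.
- move=> k k' kk' j; case: (H4 j) => [Ha [Hu Hv]].
  apply: (@approx_congr _ _ _ _ _ _ _ _ Ha).
    rewrite dotvD dotvMn (_ : _ + _ - _ = dotv (u j) a *+ k); last by ring.
    by apply: rpredMn; move: Hu; rewrite /congr_e subr0.
  rewrite !dotvD dotvMn.
  rewrite (_ : _ - _ = dotv (v j) a *+ k' - dotv (v j) a); last by ring.
  by move: Hv; rewrite /congr_e subr0 => Hv; apply: rpredB => //; apply: rpredMn.
- move=> i; split.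
    move: (H1 i); case: (p_odd p i) => [z|] //= /(_ z erefl) [Ha Hb] k.
    rewrite dotvD dotvMn; lia.
  move: (H2 i) (H3 i); case: (p_even p i) => [z|] /=.
    move=> /(_ z erefl) [Ha Hb] _; exists 0%N => k _.
    rewrite dotvD dotvMn; lia.
  move=> _ /(_ erefl) Ha M.
  exists (absz (M - (dotv (s i) a0 + dotv (t i) c + h i))%R) => k Hk.
  rewrite dotvD dotvMn; nia.
Qed.

Lemma forward (d l n m : nat)
    (r s : 'I_n -> 'rV[int]_d) (t : 'I_n -> 'rV[int]_l) (h : 'I_n -> int)
    (u v : 'I_m -> 'rV[int]_d) (w : 'I_m -> 'rV[int]_l) (dj : 'I_m -> int)
    (e : 'I_m -> int) (rel : 'I_m -> bool)
    (he : forall j, 0 < e j)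
    (c : 'rV[int]_l) (p : (2 * n).-tuple (option int)) :
  (exists a : nat -> 'rV[int]_d, compatible r s t h u v w dj e rel p c a) ->
  (exists a0 a : 'rV[int]_d, a != 0 /\
     (forall i : 'I_n, forall z, p_odd p i = Some z ->
        dotv (r i) a0 <= z /\ dotv (r i) a <= 0) /\
     (forall i : 'I_n, forall z, p_even p i = Some z ->
        z <= dotv (s i) a0 + dotv (t i) c + h i /\ 0 <= dotv (s i) a) /\
     (forall i : 'I_n, p_even p i = None -> 0 < dotv (s i) a) /\
     (forall j : 'I_m,
        approx (rel j) (e j) (dotv (u j) a0)
               (dotv (v j) (a0 + a) + dotv (w j) c + dj j) /\
        congr_e (e j) (dotv (u j) a) 0 /\
        congr_e (e j) (dotv (v j) a) 0)).
Proof.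
move=> [a [inj [Happ Hpi]]].
have HN : forall i : 'I_n, exists N : nat, forall k, (N <= k)%N ->
  (match p_even p i with Some z => z | None => 0 end)
     <= dotv (s i) (a k) + dotv (t i) c + h i.
  move=> i; move: (proj2 (Hpi i)); case: (p_even p i) => [z|] /=.
    by move=> [N HN]; exists N => k /HN.
  by move/(_ 0) => [N HN]; exists N => k /HN.
case: (fin_all_exists HN) => fN HfN.
pose N := (\max_(i < n) fN i)%N.
pose b k := a (k + N)%N.
have Hlow i k : (match p_even p i with Some z => z | None => 0 end)
     <= dotv (s i) (b k) + dotv (t i) c + h i.
  apply: HfN; apply: leq_trans (leq_bigmax i) (leq_addl _ _).
pose I := ('I_n + 'I_n + ('I_m * bool * bool))%type.
pose G (x : I) k : int := match x with
 | inl (inl i) => if p_odd p i is Some _ then - dotv (r i) (b k) else 0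
 | inl (inr i) => dotv (s i) (b k)
 | inr (j, uv, ng) =>
     let y := (dotv (if uv then v j else u j) (b k) %% e j)%Z in
     if ng then - y else y end.
have HB : forall x, exists B, forall k, B <= G x k.
  case=> [[i|i]|[[j uv] ng]]; rewrite /G.
  - move: (proj1 (Hpi i)); case: (p_odd p i) => [z|] /= H; last by exists 0.
    by exists (-z) => k; have := H (k + N)%N; rewrite /b; lia.
  - move: (Hlow i); case: (p_even p i) => [z|] H.
      by exists (z - dotv (t i) c - h i) => k; have := H k; lia.
    by exists (- dotv (t i) c - h i) => k; have := H k; lia.
  - exists (- e j) => k.
    have := @modz_ge0 (dotv (if uv then v j else u j) (b k)) (e j).
    have := @ltz_pmod (dotv (if uv then v j else u j) (b k)) (e j) (he j).
    have := he j; case: ng => /=; lia.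
case: (@mono_fin _ _ HB) => phi [Hinc Hmon].
have HJ : forall i : 'I_n, exists J : nat, forall j, (J <= j)%N ->
    p_even p i = None -> dotv (s i) (b (phi 0%N)) < dotv (s i) (b (phi j)).
  move=> i; move: (proj2 (Hpi i)); case: (p_even p i) => [z|] /=.
    by move=> _; exists 0%N.
  move=> /(_ (dotv (s i) (b (phi 0%N)) + dotv (t i) c + h i + 1)) [N0 HN0].
  exists N0 => j Hj _.
  have := HN0 (phi j + N)%N
    (leq_trans Hj (leq_trans (@incr_ge _ Hinc j) (leq_addr N _))).
  rewrite /b /=; lia.
case: (fin_all_exists HJ) => fJ HfJ.
pose J := (\max_(i < n) fJ i).+1.
have HJi i : (fJ i <= J)%N := leq_trans (leq_bigmax i) (leqnSn _).
have Hlt : (phi 0%N < phi J)%N.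
  by apply: leq_trans (Hinc 0%N) (@incr_le _ Hinc _ _ _).
exists (b (phi 0%N)), (b (phi J) - b (phi 0%N)).
have Hsub : b (phi 0%N) + (b (phi J) - b (phi 0%N)) = b (phi J).
  by rewrite addrC subrK.
split.
  rewrite subr_eq0; apply/eqP; rewrite /b => /inj E.
  by move: Hlt; rewrite -(addnK N (phi J)) E addnK ltnn.
split.
  move=> i z Hz; split.
    by have := proj1 (Hpi i); rewrite Hz /= => H; exact: H.
  rewrite dotvB; have := Hmon (inl (inl i)) 0%N J (leq0n _).
  by rewrite /G /= Hz; lia.
split.
  move=> i z Hz; split.
    by have := Hlow i (phi 0%N); rewrite Hz.
  rewrite dotvB; have := Hmon (inl (inr i)) 0%N J (leq0n _).
  by rewrite /G /=; lia.
split.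
  by move=> i Hi; rewrite dotvB; have := HfJ i J (HJi i) Hi; lia.
move=> j; rewrite Hsub.
have Hres uv : ((dotv (if uv then v j else u j) (b (phi J))) %% e j =
                 (dotv (if uv then v j else u j) (b (phi 0%N))) %% e j)%Z.
  have := Hmon (inr (j, uv, false)) 0%N J (leq0n _).
  have := Hmon (inr (j, uv, true)) 0%N J (leq0n _).
  by rewrite /G /=; lia.
split.
  by apply: Happ; rewrite ltn_add2r.
rewrite /congr_e !subr0 !dotvB -!eqz_mod_dvd.
by split; apply/eqP; [exact: (Hres false) | exact: (Hres true)].
Qed.

Theorem mainTheorem9 (d l n m : nat)
    (r s : 'I_n -> 'rV[int]_d) (t : 'I_n -> 'rV[int]_l) (h : 'I_n -> int)
    (u v : 'I_m -> 'rV[int]_d) (w : 'I_m -> 'rV[int]_l) (dj : 'I_m -> int)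
    (e : 'I_m -> int) (rel : 'I_m -> bool)
    (he : forall j, 0 < e j)
    (c : 'rV[int]_l) (p : (2 * n).-tuple (option int)) :
  (exists a : nat -> 'rV[int]_d, compatible r s t h u v w dj e rel p c a) <->
  (exists a0 a : 'rV[int]_d, a != 0 /\
     (forall i : 'I_n, forall z, p_odd p i = Some z ->
        dotv (r i) a0 <= z /\ dotv (r i) a <= 0) /\
     (forall i : 'I_n, forall z, p_even p i = Some z ->
        z <= dotv (s i) a0 + dotv (t i) c + h i /\ 0 <= dotv (s i) a) /\
     (forall i : 'I_n, p_even p i = None -> 0 < dotv (s i) a) /\
     (forall j : 'I_m,
        approx (rel j) (e j) (dotv (u j) a0)
               (dotv (v j) (a0 + a) + dotv (w j) c + dj j) /\
        congr_e (e j) (dotv (u j) a) 0 /\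
        congr_e (e j) (dotv (v j) a) 0)).
Proof.
split; [exact: forward | exact: backward].
Qed.
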